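(* Let $(G_n)$ be a sequence of graphs with $\min_{u\in V}\delta_u=\omega(\log n)$, fix $p\in[0,1]$, and for each $n$ run the $(p,\mathcal B)$-Deterministic-Majority dynamics on $G_n$ from the configuration in which every node is $\mathcal R$. (Fast disruption) If $p>1/2$, then $\Pr(\mathrm{vol}(B^{(1)})=\mathrm{vol}(V))=1-o(1)$, and consequently $\Pr(\tau=1)=1-o(1)$. (Slow disruption) If $p<1/2$, then for every $K>0$, $\Pr(\forall t\le n^K:\ \mathrm{vol}(R^{(t)})=\mathrm{vol}(V))=1-o(1)$, and consequently $\Pr(\tau>n^K)=1-o(1)$.
   Context: $G_n=(V,E)$, $V=\{1,\dots,n\}$, $N(u)$ neighbourhood, $\delta_u=|N(u)|$, $\mathrm{vol}(S)=\sum_{v\in S}\delta_v$; asymptotics as $n\to\infty$. States in $\{\mathcal R,\mathcal B\}$; $R^{(t)},B^{(t)}$ are the sets of nodes in each state at round $t$, and $\tau=\inf\{t\ge0:\mathrm{vol}(B^{(t)})/\mathrm{vol}(V)>1/2\}$. $(p,\mathcal B)$-Deterministic-Majority: in each round $t\ge1$, every node $u$, for each of its neighbours $v$ independently, sees $v$ as $\mathcal B$ with probability $p$ and otherwise sees $v$'s true state at round $t-1$; $u$ adopts the state seen by the majority of its whole neighbourhood (ties broken by some fixed rule, e.g. uniformly at random). *)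

(* Defs.v *)
From HB Require Import structures.
From mathcomp Require Import all_boot all_order all_algebra.
From mathcomp Require Import all_classical all_reals all_analysis.
Set Implicit Arguments. Unset Strict Implicit. Unset Printing Implicit Defensive.
Import Order.TTheory GRing.Theory Num.Theory.
Local Open Scope ring_scope.

(* A graph on V = 'I_n is a relation e : rel 'I_n (assumed symmetric and
   irreflexive in the theorem).  A configuration assigns to every node a
   state: true = B (blue, the disrupting state), false = R. *)
Definition config (n : nat) := {ffun 'I_n -> bool}.

Definition nbhd n (e : rel 'I_n) (u : 'I_n) : {set 'I_n} := [set v | e u v].
Definition deg n (e : rel 'I_n) (u : 'I_n) : nat := #|nbhd e u|.
Definition vol n (e : rel 'I_n) (S : pred 'I_n) : nat :=
  (\sum_(v | S v) deg e v)%N.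
Definition volV n (e : rel 'I_n) : nat := vol e predT.
Definition Bset n (x : config n) : pred 'I_n := fun v => x v.
Definition Rset n (x : config n) : pred 'I_n := fun v => ~~ x v.

Section Dynamics.
Variable R : realType.

(* Probability that u sees neighbour v as B: with prob. p it sees B,
   otherwise it sees the true state of v. *)
Definition seeB (p : R) n (x : config n) (v : 'I_n) : R :=
  p + (1 - p) * (x v)%:R.

(* Majority rule given that the set S of neighbours is seen as B:
   probability of adopting B (ties broken uniformly at random). *)
Definition adoptB n (e : rel 'I_n) (u : 'I_n) (S : {set 'I_n}) : R :=
  if (deg e u < 2 * #|S|)%N then 1
  else if (2 * #|S| == deg e u)%N then 2^-1 else 0.

Definition probB (p : R) n (e : rel 'I_n) (x : config n) (u : 'I_n) : R :=
  \sum_(S : {set 'I_n} | S \subset nbhd e u)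
     (\prod_(v in S) seeB p x v) *
     (\prod_(v in nbhd e u :\: S) (1 - seeB p x v)) * adoptB e u S.

Definition trans (p : R) n (e : rel 'I_n) (x y : config n) : R :=
  \prod_(u : 'I_n) (if y u then probB p e x u else 1 - probB p e x u).

Definition traj n T := {ffun 'I_T.+1 -> config n}.
Definition at_ n T (w : traj n T) (t : nat) : config n := w (inord t).

Definition all_R n : config n := [ffun => false].

Definition path_prob (p : R) n (e : rel 'I_n) T (w : traj n T) : R :=
  (w ord0 == all_R n)%:R *
  \prod_(i < T) trans p e (at_ w i) (at_ w i.+1).

Definition Pr (p : R) n (e : rel 'I_n) T (E : pred (traj n T)) : R :=
  \sum_(w : traj n T | E w) path_prob p e w.

Definition Bfrac n (e : rel 'I_n) (x : config n) : R :=
  (vol e (Bset x))%:R / (volV e)%:R.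

End Dynamics.

(* Main.v *)
Require Import Defs.
From HB Require Import structures.
From mathcomp Require Import all_boot all_order all_algebra.
From mathcomp Require Import all_classical all_reals all_analysis.
From mathcomp Require Import ring lra zify.
Import Order.TTheory GRing.Theory Num.Theory numFieldNormedType.Exports.
Local Open Scope classical_set_scope.
Local Open Scope ring_scope.
Section A.
Set Implicit Arguments. Unset Strict Implicit.
Variable R : realType.

Lemma subset_expand (T : finType) (A : {set T}) (a b : T -> R) :
  \prod_(v in A) (a v + b v) =
  \sum_(S : {set T} | S \subset A) (\prod_(v in S) a v) * \prod_(v in A :\: S) b v.
Proof.
pose F v := if v \in A then a v else 0.
pose G v := if v \in A then b v else 1.
have -> : \prod_(v in A) (a v + b v) = \prod_v (F v + G v).
  rewrite big_mkcond; apply: eq_bigr => v _; rewrite /F /G.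
  by case: (v \in A); rewrite ?add0r.
rewrite bigA_distr (bigID (fun S : {set T} => S \subset A)) /=.
rewrite [X in _ + X]big1 ?addr0; last first.
  move=> S /subsetPn [v vS vA].
  rewrite (bigD1 v) //= vS /F (negbTE vA) mul0r //.
apply: eq_bigr => S SA.
rewrite (bigID (fun v => v \in S)) /=.
congr (_ * _).
  apply: eq_bigr => v vS; rewrite vS /F (fintype.subsetP SA v vS) //.
rewrite [RHS]big_mkcond [LHS]big_mkcond /=; apply: eq_bigr => v _.
rewrite /G finset.in_setD; by case: (v \in S); case: (v \in A).
Qed.

Lemma seeB_ge0 (p : R) n (x : config n) v : 0 <= p -> p <= 1 -> 0 <= seeB p x v.
Proof. move=> p0 p1; rewrite /seeB; case: (x v) => /=; rewrite ?mulr1 ?mulr0; lra. Qed.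
Lemma seeB_le1 (p : R) n (x : config n) v : 0 <= p -> p <= 1 -> seeB p x v <= 1.
Proof. move=> p0 p1; rewrite /seeB; case: (x v) => /=; rewrite ?mulr1 ?mulr0; lra. Qed.
Lemma adoptB_ge0 n (e : rel 'I_n) u S : 0 <= adoptB R e u S.
Proof. rewrite /adoptB; case: ifP => _; first lra; case: ifP => _; lra. Qed.
Lemma adoptB_le1 n (e : rel 'I_n) u S : adoptB R e u S <= 1.
Proof. rewrite /adoptB; case: ifP => _; first lra; case: ifP => _; lra. Qed.

Lemma probB_ge0 (p : R) n e (x : config n) u : 0 <= p -> p <= 1 -> 0 <= probB p e x u.
Proof.
move=> p0 p1; apply: sumr_ge0 => S _.
apply: mulr_ge0; last exact: adoptB_ge0.
apply: mulr_ge0; apply: prodr_ge0 => v _.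
  exact: seeB_ge0.
by rewrite subr_ge0; apply: seeB_le1.
Qed.

Lemma probB_le1 (p : R) n e (x : config n) u : 0 <= p -> p <= 1 -> probB p e x u <= 1.
Proof.
move=> p0 p1.
have <- : \prod_(v in nbhd e u) (seeB p x v + (1 - seeB p x v)) = 1.
  by apply: big1 => v _; rewrite addrC subrK.
rewrite subset_expand; apply: ler_sum => S _.
rewrite -[X in _ <= X]mulr1; apply: ler_wpM2l; last exact: adoptB_le1.
apply: mulr_ge0; apply: prodr_ge0 => v _.
  exact: seeB_ge0.
by rewrite subr_ge0; apply: seeB_le1.
Qed.

Lemma trans_ge0 (p : R) n e (x y : config n) : 0 <= p -> p <= 1 -> 0 <= trans p e x y.
Proof.
move=> p0 p1; apply: prodr_ge0 => u _; case: (y u).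
  exact: probB_ge0.
by rewrite subr_ge0; apply: probB_le1.
Qed.

Lemma trans_sum (p : R) n e (x : config n) : \sum_y trans p e x y = 1.
Proof.
rewrite /trans.
pose F (u : 'I_n) (b : bool) := if b then probB p e x u else 1 - probB p e x u.
have -> : \sum_(y : config n) \prod_u (if y u then probB p e x u else 1 - probB p e x u)
   = \sum_(y : {ffun 'I_n -> bool}) \prod_u F u (y u) by [].
rewrite -bigA_distr_bigA /=; apply: big1 => u _.
by rewrite big_bool /F /= addrC subrK.
Qed.

Lemma sum_chain (C : finType) (F : C -> C -> R) (HF : forall x, \sum_y F x y = 1) T (g : C -> R) :
  \sum_(w : {ffun 'I_T.+1 -> C}) g (w ord0) * \prod_(i < T) F (w (inord i)) (w (inord i.+1))
  = \sum_x g x.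
Proof.
elim: T g => [|T IH] g.
  under eq_bigr do rewrite big_ord0 mulr1.
  rewrite (reindex (fun x : C => [ffun=> x] : {ffun 'I_1 -> C})) /=.
    by apply: eq_bigr => x _; rewrite ffunE.
  apply: onW_bij; exists (fun w : {ffun 'I_1 -> C} => w ord0).
    by move=> x; rewrite ffunE.
  by move=> w; apply/ffunP => i; rewrite ffunE (ord1 i).
pose h (xt : C * {ffun 'I_T.+1 -> C}) : {ffun 'I_T.+2 -> C} :=
  [ffun i : 'I_T.+2 => if (i : nat) is k.+1 then xt.2 (inord k) else xt.1].
have h0 xt : h xt (inord 0) = xt.1 by rewrite ffunE inordK.
have hS xt k : (k <= T)%N -> h xt (inord k.+1) = xt.2 (inord k).
  by move=> kT; rewrite ffunE inordK // ltnS.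
rewrite (reindex h) /=; last first.
  apply: onW_bij.
  exists (fun w : {ffun 'I_T.+2 -> C} => (w ord0, [ffun j : 'I_T.+1 => w (inord j.+1)])).
    case=> x t /=; congr (_, _).
      by rewrite ffunE.
    apply/ffunP => j; have jT := ltn_ord j; rewrite !ffunE inordK /=; [by rewrite inord_val | by rewrite ltnS].
  move=> w; apply/ffunP => -[[|k] Hk]; rewrite ffunE /=.
    by congr (w _); apply: val_inj.
  rewrite ffunE inordK; last by rewrite -ltnS.
  by congr (w _); apply: val_inj; rewrite /= inordK.
rewrite -(pair_big predT predT (fun x t => g (h (x, t) ord0) *
     \prod_(i < T.+1) F (h (x, t) (inord i)) (h (x, t) (inord i.+1)))) /=.
apply: eq_bigr => x _.
have -> : \sum_(t : {ffun 'I_T.+1 -> C}) g (h (x, t) ord0) *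
     \prod_(i < T.+1) F (h (x, t) (inord i)) (h (x, t) (inord i.+1))
   = g x * \sum_(t : {ffun 'I_T.+1 -> C}) F x (t ord0) *
     \prod_(i < T) F (t (inord i)) (t (inord i.+1)).
  rewrite mulr_sumr; apply: eq_bigr => t _.
  rewrite big_ord_recl !mulrA; congr (_ * _ * _).
  - by rewrite ffunE.
  - rewrite /= h0 hS // /=; congr (F x (t _)); apply: val_inj; rewrite /= inordK //.
  - apply: eq_bigr => i _; rewrite !lift0 !hS //; last (by apply: ltnW). 


by rewrite IH HF mulr1.
Qed.


Lemma total_prob (p : R) n (e : rel 'I_n) T :
  \sum_(w : traj n T) path_prob p e w = 1.
Proof.
rewrite /path_prob /at_.
rewrite (@sum_chain (config n) (fun x y => trans p e x y) (@trans_sum p n e) T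
          (fun x => (x == all_R n)%:R)).
rewrite (bigD1 (all_R n)) //= eqxx big1 ?addr0 // => x /negbTE -> //.
Qed.

Lemma path_prob_ge0 (p : R) n (e : rel 'I_n) T (w : traj n T) :
  0 <= p -> p <= 1 -> 0 <= path_prob p e w.
Proof.
move=> p0 p1; apply: mulr_ge0; first exact: ler0n.
by apply: prodr_ge0 => i _; apply: trans_ge0.
Qed.

Lemma Pr_le1 (p : R) n (e : rel 'I_n) T (E : pred (traj n T)) :
  0 <= p -> p <= 1 -> Pr p e E <= 1.
Proof.
move=> p0 p1; rewrite -(total_prob p e T) /Pr [X in _ <= X](bigID E) /=.
by rewrite lerDl; apply: sumr_ge0 => w _; apply: path_prob_ge0.
Qed.

Lemma Pr_ge (p : R) n (e : rel 'I_n) T (E : pred (traj n T)) w :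
  0 <= p -> p <= 1 -> E w -> path_prob p e w <= Pr p e E.
Proof.
move=> p0 p1 Ew; rewrite /Pr (bigD1 w) //= lerDl.
by apply: sumr_ge0 => v _; apply: path_prob_ge0.
Qed.

Definition all_B n : config n := [ffun => true].

Lemma pp_const (p : R) n (e : rel 'I_n) T :
  path_prob p e ([ffun => all_R n] : traj n T) =
  (\prod_u (1 - probB p e (all_R n) u)) ^+ T.
Proof.
rewrite /path_prob /at_ !ffunE eqxx mul1r.
rewrite -[in RHS](card_ord T) -prodr_const; apply: eq_bigr => i _.
rewrite !ffunE /trans; apply: eq_bigr => u _; by rewrite ffunE.
Qed.

Definition wRB n : traj n 1 := [ffun i => if i == ord0 then all_R n else all_B n].

Lemma pp_RB (p : R) n (e : rel 'I_n) :
  path_prob p e (wRB n) = \prod_u probB p e (all_R n) u.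
Proof.
rewrite /path_prob /at_ !ffunE !eqxx mul1r big_ord1 /trans.
apply: eq_bigr => u _.
have -> : (inord 0 : 'I_2) = ord0 by apply: val_inj; rewrite /= inordK.
rewrite !ffunE; have -> : (inord 1 : 'I_2) == ord0 = false by apply/eqP => /(congr1 val); rewrite /= inordK.
by rewrite !ffunE.
Qed.

Lemma probB_allR (p : R) n (e : rel 'I_n) u :
  probB p e (all_R n) u =
  \sum_(S : {set 'I_n} | S \subset nbhd e u)
     p ^+ #|S| * (1 - p) ^+ #|nbhd e u :\: S| * adoptB R e u S.
Proof.
apply: eq_bigr => S _; rewrite /seeB.
under eq_bigr do rewrite ffunE /= mulr0 addr0.
under [X in _ * X * _]eq_bigr do rewrite ffunE /= mulr0 addr0.
by rewrite !prodr_const.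
Qed.

Lemma one_sub_probB_allR (p : R) n (e : rel 'I_n) u :
  1 - probB p e (all_R n) u =
  \sum_(S : {set 'I_n} | S \subset nbhd e u)
     p ^+ #|S| * (1 - p) ^+ #|nbhd e u :\: S| * (1 - adoptB R e u S).
Proof.
have E1 : \sum_(S : {set 'I_n} | S \subset nbhd e u)
     p ^+ #|S| * (1 - p) ^+ #|nbhd e u :\: S| = 1.
  transitivity (\prod_(v in nbhd e u) (p + (1 - p))); last first.
    by rewrite big1 // => v _; rewrite addrC subrK.
  rewrite subset_expand; apply: eq_bigr => S _; by rewrite !prodr_const.
under eq_bigr => S _ do rewrite mulrBr mulr1.
by rewrite sumrB E1 probB_allR.
Qed.

Lemma key_pow (x y : R) i j : 0 <= y -> y <= x -> (i <= j)%N ->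
  x ^+ i * y ^+ j <= Num.sqrt (x * y) ^+ (i + j).
Proof.
move=> y0 yx /subnKC <-; set m := (j - i)%N.
have xy0 : 0 <= x * y by apply: mulr_ge0 => //; apply: le_trans yx.
rewrite exprD mulrA -exprMn addnA addnn -mul2n exprD exprM sqr_sqrtr //.
apply: ler_wpM2l; first exact: exprn_ge0.
apply: lerXn2r; rewrite ?nnegrE ?sqrtr_ge0 //.
apply: (@le_trans _ _ (Num.sqrt (y ^+ 2))); first by rewrite sqrtr_sqr ger0_norm.
apply: ler_wsqrtr; by rewrite expr2 ler_wpM2r.
Qed.

Lemma sum_bound (p s : R) n (N : {set 'I_n}) (c : {set 'I_n} -> R) :
  0 <= s ->
  (forall S : {set 'I_n}, S \subset N -> 0 <= c S <= 1) ->
  (forall S : {set 'I_n}, S \subset N -> c S != 0 ->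
     p ^+ #|S| * (1 - p) ^+ #|N :\: S| <= s ^+ #|N|) ->
  0 <= p -> p <= 1 ->
  \sum_(S : {set 'I_n} | S \subset N) p ^+ #|S| * (1 - p) ^+ #|N :\: S| * c S
    <= (2 * s) ^+ #|N|.
Proof.
move=> s0 c01 Hb p0 p1.
apply: le_trans (_ : \sum_(S : {set 'I_n} | S \subset N) s ^+ #|N| <= _).
  apply: ler_sum => S SN; have /andP[c0 c1] := c01 S SN.
  have t0 : 0 <= p ^+ #|S| * (1 - p) ^+ #|N :\: S|.
    by apply: mulr_ge0; apply: exprn_ge0; lra.
  have [/eqP->|cn0] := boolP (c S == 0).
    by rewrite mulr0; apply: exprn_ge0.
  apply: le_trans (Hb S SN cn0).
  by rewrite -[X in _ <= X]mulr1; apply: ler_wpM2l.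
rewrite (eq_bigl (fun S => S \in powerset N)); last by move=> S; rewrite powersetE.
by rewrite sumr_const card_powerset exprMn -[_ *+ (2 ^ _)]mulr_natr natrX mulrC.
Qed.


Lemma bad_hi (p : R) n (e : rel 'I_n) u : 2^-1 < p -> p <= 1 ->
  1 - probB p e (all_R n) u <= (2 * Num.sqrt (p * (1 - p))) ^+ deg e u.
Proof.
move=> hp p1; rewrite one_sub_probB_allR /deg.
apply: sum_bound; [exact: sqrtr_ge0 | | | lra | lra].
  by move=> S _; have := adoptB_ge0 e u S; have := adoptB_le1 e u S; move=> *; apply/andP; split; lra.
move=> S SN; rewrite /adoptB /deg; case: ifP => [_|/negbT hS _].
  by rewrite subrr eqxx.
have cS := subset_leq_card SN.
rewrite cardsDS //.
have -> : #|nbhd e u| = (#|S| + (#|nbhd e u| - #|S|))%N by rewrite subnKC.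
rewrite {1}subnKC //; apply: key_pow; [lra | lra | ].
rewrite -leqNgt in hS; lia.
Qed.

Lemma bad_lo (p : R) n (e : rel 'I_n) u : 0 <= p -> p < 2^-1 ->
  probB p e (all_R n) u <= (2 * Num.sqrt (p * (1 - p))) ^+ deg e u.
Proof.
move=> p0 hp; rewrite probB_allR /deg.
apply: sum_bound; [exact: sqrtr_ge0 | | | lra | lra].
  by move=> S _; apply/andP; split; [apply: adoptB_ge0 | apply: adoptB_le1].
move=> S SN; rewrite /adoptB /deg => hS.
have hd : (#|nbhd e u| <= 2 * #|S|)%N.
  have [h|h] := ltnP #|nbhd e u| (2 * #|S|); first exact: ltnW.
  move: hS; rewrite ltnNge h /=; have [e2|] := boolP ((2 * #|S|)%N == #|nbhd e u|); first by rewrite (eqP e2).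
  by move=> _; rewrite eqxx.
have cS := subset_leq_card SN.
rewrite cardsDS // mulrC [p * _]mulrC.
have -> : #|nbhd e u| = ((#|nbhd e u| - #|S|) + #|S|)%N by rewrite subnK.
rewrite {1}subnK //; apply: key_pow; [lra | lra | ].
lia.
Qed.

Lemma rho_lt1 (p : R) : 0 <= p -> p <= 1 -> (p < 2^-1 \/ 2^-1 < p) ->
  2 * Num.sqrt (p * (1 - p)) < 1.
Proof.
move=> p0 p1 hp.
have h0 : 0 <= p * (1 - p) by apply: mulr_ge0; lra.
have hs := sqr_sqrtr h0; have s0 := sqrtr_ge0 (p * (1 - p)).
move: hs s0; set s := Num.sqrt _ => hs s0.
rewrite expr2 in hs.
case: hp => hp; nra.
Qed.

Lemma weier (I : Type) (r : seq I) (a : I -> R) :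
  (forall i, 0 <= a i <= 1) -> 1 - \sum_(i <- r) a i <= \prod_(i <- r) (1 - a i).
Proof.
move=> ha; elim: r => [|x r IH]; first by rewrite !big_nil subr0.
rewrite !big_cons; have /andP[h0 h1] := ha x.
have s0 : 0 <= \sum_(i <- r) a i by apply: sumr_ge0 => i _; have /andP[] := ha i.
nra.
Qed.

Lemma bern (x : R) T : 0 <= x -> x <= 1 -> 1 - T%:R * x <= (1 - x) ^+ T.
Proof.
move=> x0 x1; elim: T => [|T IH]; first by rewrite mul0r subr0 expr0.
rewrite exprS -addn1 natrD.
have : 0 <= (1 - x) ^+ T by apply: exprn_ge0; lra.
have : 0 <= T%:R :> R by [].
nra.
Qed.

Lemma cvg_one (f : nat -> R) N :
  (forall n, (N <= n)%N -> 1 - n%:R^-1 <= f n <= 1) -> f @ \oo --> (1 : R).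
Proof.
move=> hf; apply/cvgrPdist_le => eps e0.
exists (maxn N.+1 (Num.truncn (eps^-1)).+1) => // n /=.
rewrite geq_max => /andP[hN he].
have /andP[h1 h2] := hf n (ltnW hN).
have n0 : 0 < n%:R :> R by rewrite ltr0n; apply: leq_trans hN.
have ie : n%:R^-1 <= eps.
  rewrite -[eps]invrK lef_pV2 ?posrE ?invr_gt0 //.
  apply: le_trans (ltW (truncnS_gt _)) _; by rewrite ler_nat.
rewrite ger0_norm; lra.
Qed.

End A.

Section B.
Variable R : realType.
Lemma decay (G : forall n : nat, rel 'I_n)
  (Gdeg : forall C : R, exists N : nat, forall n : nat, (N <= n)%N ->
            forall u : 'I_n, C * ln (n%:R) <= (deg (G n) u)%:R)
  (rho : R) : 0 <= rho -> rho < 1 -> forall M : nat, exists N : nat,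
  forall n, (N <= n)%N -> forall u : 'I_n, rho ^+ deg (G n) u <= (n%:R ^+ M)^-1.
Proof.
move=> r0 r1 M.
pose r := (1 + rho) / 2.
have r0' : 0 < r by rewrite /r; lra.
have r1' : r < 1 by rewrite /r; lra.
pose L := ln r.
have L0 : L < 0 by apply: ln_lt0; rewrite r0' r1'.
pose c := - M%:R / L.
have hC : c * L = - M%:R by rewrite /c divfK // ltr0_neq0.
have [N0 HN0] := Gdeg c.
exists (maxn N0 1) => n; rewrite geq_max => /andP[hN hn] u.
have := HN0 n hN u; move: (deg (G n) u) => d hd.
have n0 : 0 < n%:R :> R by rewrite ltr0n.
apply: le_trans (_ : r ^+ d <= _).
  apply: lerXn2r; rewrite ?nnegrE /r; lra.
rewrite -ler_ln ?posrE ?invr_gt0 ?exprn_gt0 //.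
rewrite lnV ?posrE ?exprn_gt0 // !lnXn // -[X in X <= _]mulr_natr -[X in - X]mulr_natr.
move: hd; rewrite -/L; move: (ln n%:R) => l hd.
have e1 : c * l * L = - (M%:R * l) by rewrite mulrAC hC mulNr.
have h2 : (d%:R - c * l) * L <= 0 by apply: mulr_ge0_le0; lra.
rewrite mulrBl in h2.
lra.
Qed.

End B.

Theorem proposition6p2 (R : realType) (G : forall n : nat, rel 'I_n)
  (Gsym : forall n, symmetric (G n)) (Girr : forall n, irreflexive (G n))
  (Gdeg : forall C : R, exists N : nat, forall n : nat, (N <= n)%N ->
            forall u : 'I_n, C * ln (n%:R) <= (deg (G n) u)%:R)
  (p : R) (p0 : 0 <= p) (p1 : p <= 1) :
  (2^-1 < p ->
     (fun n => Pr p (G n)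
        (fun w : traj n 1 => vol (G n) (Bset (at_ w 1)) == volV (G n)))
       @ \oo --> (1 : R)
     /\
     (fun n => Pr p (G n)
        (fun w : traj n 1 => (Bfrac R (G n) (at_ w 0) <= 2^-1)
                             && (2^-1 < Bfrac R (G n) (at_ w 1))))
       @ \oo --> (1 : R))
  /\
  (p < 2^-1 -> forall K : R, 0 < K ->
     (fun n => Pr p (G n)
        (fun w : traj n (Num.truncn ((n%:R : R) `^ K)) =>
           [forall t : 'I_(Num.truncn ((n%:R : R) `^ K)).+1,
              vol (G n) (Rset (at_ w t)) == volV (G n)]))
       @ \oo --> (1 : R)
     /\
     (fun n => Pr p (G n)
        (fun w : traj n (Num.truncn ((n%:R : R) `^ K)) =>
           [forall t : 'I_(Num.truncn ((n%:R : R) `^ K)).+1,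
              Bfrac R (G n) (at_ w t) <= 2^-1]))
       @ \oo --> (1 : R)).
Proof.
pose rho := 2 * Num.sqrt (p * (1 - p)).
have rho0 : 0 <= rho by rewrite /rho mulr_ge0 // sqrtr_ge0.
have volB_all n (e : rel 'I_n) : vol e (Bset (all_B n)) = volV e.
  by rewrite /volV /vol; apply: eq_bigl => v; rewrite /Bset ffunE.
have volR_all n (e : rel 'I_n) : vol e (Rset (all_R n)) = volV e.
  by rewrite /volV /vol; apply: eq_bigl => v; rewrite /Rset ffunE.
have volB0 n (e : rel 'I_n) : vol e (Bset (all_R n)) = 0%N.
  by rewrite /vol big_pred0 // => v; rewrite /Bset ffunE.
have Bfrac0 n (e : rel 'I_n) : Bfrac R e (all_R n) = 0 by rewrite /Bfrac volB0 mul0r.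
have [N1 HN1] : exists N1, forall n, (N1 <= n)%N -> forall u : 'I_n, (0 < deg (G n) u)%N.
  have [N HN] := Gdeg 1; exists (maxn N 2) => n; rewrite geq_max => /andP[hN h2] u.
  have := HN n hN u; rewrite mul1r => h.
  have : 0 < ln (n%:R : R) by apply: ln_gt0; rewrite ltr1n.
  move=> hl; rewrite -(ltr0n R); lra.
have pr01 n (x : config n) u : 0 <= probB p (G n) x u <= 1.
  by rewrite probB_ge0 ?probB_le1.
split.
  move=> hp; have rl := rho_lt1 p0 p1 (or_intror hp).
  have [N HN] := @decay R G Gdeg rho rho0 rl 2.
  pose N2 := maxn (maxn N N1) 1.
  have lb n : (N2 <= n)%N -> 1 - n%:R^-1 <= path_prob p (G n) (wRB n).
    rewrite !geq_max => /andP[/andP[hN hN1] hn].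
    have n0 : 0 < n%:R :> R by rewrite ltr0n.
    rewrite pp_RB.
    apply: le_trans (_ : 1 - \sum_u (1 - probB p (G n) (all_R n) u) <= _).
      rewrite lerD2l lerN2.
      apply: le_trans (_ : \sum_(u : 'I_n) (n%:R ^+ 2)^-1 <= _).
        apply: ler_sum => u _; apply: le_trans (bad_hi _ _ hp p1) _.
        exact: HN.
      rewrite sumr_const card_ord -[(_ ^+ 2)^-1 *+ _]mulr_natl expr2 invfM mulrA divff ?mul1r //.
      exact: lt0r_neq0.
    have E : \prod_u (1 - (1 - probB p (G n) (all_R n) u)) = \prod_u probB p (G n) (all_R n) u.
      by apply: eq_bigr => u _; rewrite opprB addrC subrK.
    rewrite -E; apply: weier => u; have /andP[h0 h1] := pr01 n (all_R n) u.
    apply/andP; split; lra.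
  have at0 n : at_ (wRB n) 0 = all_R n.
    by rewrite /at_ ffunE; have -> : (inord 0 : 'I_2) == ord0 by apply/eqP/val_inj; rewrite /= inordK.
  have at1 n : at_ (wRB n) 1 = all_B n.
    rewrite /at_ ffunE; have -> // : (inord 1 : 'I_2) == ord0 = false.
    by apply/eqP => /(congr1 val); rewrite /= inordK.
  split.
    apply: (@cvg_one _ _ N2) => n hn; rewrite Pr_le1 // andbT.
    apply: le_trans (lb n hn) _; apply: Pr_ge => //.
    by rewrite at1 volB_all.
  apply: (@cvg_one _ _ N2) => n hn; rewrite Pr_le1 // andbT.
  apply: le_trans (lb n hn) _; apply: Pr_ge => //.
  move: hn; rewrite !geq_max => /andP[/andP[hN hN1] hn].
  have vpos : (0 < volV (G n))%N.
    by rewrite /volV /vol (bigD1 (Ordinal hn)) //=; apply: ltn_addr; exact: HN1.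
  rewrite at0 at1 Bfrac0 /Bfrac volB_all divff; first by apply/andP; split; lra.
  by rewrite pnatr_eq0 -lt0n.
move=> hp K K0; have rl := rho_lt1 p0 p1 (or_introl hp).
pose k := (Num.truncn K).+1.
have [N HN] := @decay R G Gdeg rho rho0 rl k.+2.
pose N2 := maxn N 1.
have lb n : (N2 <= n)%N -> 1 - n%:R^-1 <=
    path_prob p (G n) ([ffun => all_R n] : traj n (Num.truncn ((n%:R : R) `^ K))).
  rewrite !geq_max => /andP[hN hn].
  have n0 : 0 < n%:R :> R by rewrite ltr0n.
  have n1 : 1 <= n%:R :> R by rewrite ler1n.
  rewrite pp_const.
  set T := Num.truncn _.
  set s := \sum_u probB p (G n) (all_R n) u.
  have hs : s <= (n%:R ^+ k.+1)^-1.
    apply: le_trans (_ : \sum_(u : 'I_n) (n%:R ^+ k.+2)^-1 <= _).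
      apply: ler_sum => u _; apply: le_trans (bad_lo _ _ p0 hp) _; exact: HN.
    rewrite sumr_const card_ord -[(_ ^+ k.+2)^-1 *+ _]mulr_natl exprS invfM mulrA divff ?mul1r //.
    exact: lt0r_neq0.
  have s0 : 0 <= s by apply: sumr_ge0 => u _; have /andP[] := pr01 n (all_R n) u.
  have hk1 : ((n%:R : R) ^+ k.+1)^-1 <= 1.
    by rewrite invf_le1 ?exprn_ege1 ?exprn_gt0.
  have hT : (T%:R : R) <= (n%:R : R) ^+ k.
    apply: le_trans (_ : n%:R `^ K <= _); first by rewrite truncn_le powR_ge0.
    rewrite -powR_mulrn ?ler0n //; apply: ler_powR => //.
    rewrite /k; apply: ltW; exact: truncnS_gt.
  have hTs : T%:R * s <= n%:R^-1.
    apply: le_trans (_ : n%:R ^+ k * (n%:R ^+ k.+1)^-1 <= _).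
      by apply: ler_pM.
    rewrite exprSr invfM mulrA divff ?mul1r //; apply: lt0r_neq0; exact: exprn_gt0.
  apply: le_trans (_ : 1 - T%:R * s <= _); first lra.
  apply: le_trans (bern _ s0 _) _; first lra.
  apply: lerXn2r; rewrite ?nnegrE; [lra | | ].
    apply: prodr_ge0 => u _; have /andP[_ h] := pr01 n (all_R n) u; lra.
  by apply: weier => u; exact: pr01.
split.
  apply: (@cvg_one _ _ N2) => n hn; rewrite Pr_le1 // andbT.
  apply: le_trans (lb n hn) _; apply: Pr_ge => //.
  by apply/forallP => t; rewrite /at_ ffunE volR_all.
apply: (@cvg_one _ _ N2) => n hn; rewrite Pr_le1 // andbT.
apply: le_trans (lb n hn) _; apply: Pr_ge => //.
apply/forallP => t; rewrite /at_ ffunE Bfrac0; lra.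
Qed.
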